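(* Let $A_1$ be the real $2\times2\times2$ symmetric tensor with $a_{111}=1$, $a_{222}=1$ and all other entries $0$ (associated cubic $x^3+y^3$), and let $A_2$ be the real $2\times2\times2$ symmetric tensor with $a_{111}=1$, $a_{122}=a_{212}=a_{221}=-1$ and all other entries $0$ (associated cubic $x^3-3xy^2$). Then $A_1$ and $A_2$ are not $\operatorname{GL}_2(\mathbb{R})$-equivalent, but they have the same number of eigenpair classes and the same number of zero eigenvalues (both have $3$ eigenpair classes, none with zero eigenvalue).
   Context: Two real symmetric tensors $A,B$ of order $m$ and dimension $n$ are $\operatorname{GL}_n(\mathbb{R})$-equivalent if there is $P=(p_{ij})\in\operatorname{GL}_n(\mathbb{R})$ with $b_{j_1\dots j_m}=\sum_{i_1,\dots,i_m} a_{i_1\dots i_m}p_{i_1j_1}\cdots p_{i_mj_m}$; equivalently, their associated forms $f(\mathbf{x})=\sum a_{i_1\dots i_m}x_{i_1}\cdots x_{i_m}$ are related by $f(\mathbf{x})\mapsto f(P\mathbf{x})$. An eigenpair of $A$ is $(\lambda,\mathbf{x})$ with $\lambda\in\mathbb{C}$, $\mathbf{x}\in\mathbb{C}^n\setminus\{0\}$ and $A\mathbf{x}^{m-1}=\lambda\mathbf{x}$, where $(A\mathbf{x}^{m-1})_i=\sum_{i_2,\dots,i_m}a_{i i_2\dots i_m}x_{i_2}\cdots x_{i_m}$. Two eigenpairs $(\lambda,\mathbf{x}),(\lambda',\mathbf{x}')$ are equivalent if $\lambda'=t^{m-2}\lambda$, $\mathbf{x}'=t\mathbf{x}$ for some $t\in\mathbb{C}\setminus\{0\}$;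 the classes are eigenpair classes. The number of zero eigenvalues is the number of eigenpair classes with eigenvalue $0$. *)

(* Defs.v *)
From HB Require Import structures.
From mathcomp Require Import all_boot all_order all_algebra.
From mathcomp Require Import reals.
From mathcomp Require Import complex.
Set Implicit Arguments. Unset Strict Implicit. Unset Printing Implicit Defensive.
Import Order.TTheory GRing.Theory Num.Theory.
Local Open Scope ring_scope.

Definition tensor3 (R : Type) (n : nat) := 'I_n -> 'I_n -> 'I_n -> R.

Definition symmetric3 (R : Type) n (A : tensor3 R n) : Prop :=
  forall i j k, A i j k = A j i k /\ A i j k = A i k j.

Definition GL_equiv (R : realType) n (A B : tensor3 R n) : Prop :=
  exists P : 'M[R]_n, P \in unitmx /\
    forall j1 j2 j3, B j1 j2 j3 =
      \sum_(i1 < n) \sum_(i2 < n) \sum_(i3 < n)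
         A i1 i2 i3 * P i1 j1 * P i2 j2 * P i3 j3.

(* (A x^{m-1})_i for m = 3, with the real entries embedded in C = R[i]. *)
Definition tensor_apply (R : realType) n (A : tensor3 R n) (x : 'rV[R[i]]_n)
  (i : 'I_n) : R[i] :=
  \sum_(i2 < n) \sum_(i3 < n) (real_complex R (A i i2 i3)) * x 0 i2 * x 0 i3.

Definition eigenpair (R : realType) n (A : tensor3 R n)
  (lam : R[i]) (x : 'rV[R[i]]_n) : Prop :=
  x != 0 /\ forall i, tensor_apply A x i = lam * x 0 i.

(* Equivalence of eigenpairs for m = 3: lambda' = t^{m-2} lambda = t lambda,
   x' = t x, for some nonzero complex t. *)
Definition eigenpair_equiv (R : realType) n
  (p q : R[i] * 'rV[R[i]]_n) : Prop :=
  exists t : R[i], t != 0 /\ q.1 = t ^+ (3 - 2) * p.1 /\ q.2 = t *: p.2.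

Definition num_eig_classes_with (R : realType) n (A : tensor3 R n)
  (P : R[i] -> Prop) (k : nat) : Prop :=
  exists e : 'I_k -> R[i] * 'rV[R[i]]_n,
    (forall r, eigenpair A (e r).1 (e r).2 /\ P (e r).1) /\
    (forall r s, eigenpair_equiv (e r) (e s) -> r = s) /\
    (forall lam x, eigenpair A lam x -> P lam ->
       exists r, eigenpair_equiv (e r) (lam, x)).

Definition num_eigenpair_classes (R : realType) n (A : tensor3 R n) (k : nat) :=
  num_eig_classes_with A (fun _ => True) k.

Definition num_zero_eigenvalues (R : realType) n (A : tensor3 R n) (k : nat) :=
  num_eig_classes_with A (fun lam => lam = 0) k.

Definition A1 (R : realType) : tensor3 R 2 := fun i j k =>
  if [&& (i == 0 :> nat), (j == 0 :> nat) & (k == 0 :> nat)] then 1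
  else if [&& (i == 1 :> nat), (j == 1 :> nat) & (k == 1 :> nat)] then 1
  else 0.

(* A2: a111 = 1, a122 = a212 = a221 = -1, others 0  (cubic x^3 - 3xy^2). *)
Definition A2 (R : realType) : tensor3 R 2 := fun i j k =>
  if [&& (i == 0 :> nat), (j == 0 :> nat) & (k == 0 :> nat)] then 1
  else if ((i == 0 :> nat) + (j == 0 :> nat) + (k == 0 :> nat) == 1)%N then -1
  else 0.

(* Main.v *)
Require Import Defs.
From HB Require Import structures.
From mathcomp Require Import all_boot all_order all_algebra.
From mathcomp Require Import reals.
From mathcomp Require Import complex.
From mathcomp Require Import ring lra.
Import Order.TTheory GRing.Theory Num.Theory.
Local Open Scope ring_scope. Local Open Scope complex_scope.
Set Implicit Arguments. Unset Strict Implicit.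

Section S.
Variable R : realType.
Local Notation C := (R[i]).

Lemma ord2P (i : 'I_2) : i = ord0 \/ i = ord_max.
Proof. by case: i => [[|[|//]] Hi]; [left|right]; apply/val_inj. Qed.

Definition o0 : 'I_3 := @Ordinal 3 0 isT.
Definition o1 : 'I_3 := @Ordinal 3 1 isT.
Definition o2 : 'I_3 := @Ordinal 3 2 isT.
Lemma ord3P (i : 'I_3) : i = o0 \/ i = o1 \/ i = o2.
Proof. by case: i => [[|[|[|//]]] Hi]; [left|right;left|right;right]; apply/val_inj. Qed.

Definition vec2 (a b : C) : 'rV[C]_2 := \row_(j < 2) (if j == ord0 then a else b).
Lemma vec2_0 a b : vec2 a b 0 ord0 = a. Proof. by rewrite mxE. Qed.
Lemma vec2_1 a b : vec2 a b 0 ord_max = b. Proof. by rewrite mxE. Qed.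
Lemma vec2E (x : 'rV[C]_2) : x = vec2 (x 0 ord0) (x 0 ord_max).
Proof.
apply/rowP => j; rewrite mxE; case: (ord2P j) => -> //=.
Qed.
Lemma vec2Z c a b : c *: vec2 a b = vec2 (c * a) (c * b).
Proof. by apply/rowP => j; rewrite !mxE; case: ifP. Qed.
Lemma vec2_eq0 a b : vec2 a b = 0 -> a = 0 /\ b = 0.
Proof.
move=> H; split.
  by have := congr1 (fun m : 'rV_2 => m 0 ord0) H; rewrite vec2_0 mxE.
by have := congr1 (fun m : 'rV_2 => m 0 ord_max) H; rewrite vec2_1 mxE.
Qed.
Lemma vec2_inj a b a' b' : vec2 a b = vec2 a' b' -> a = a' /\ b = b'.
Proof.
move=> H; split.
  by have := congr1 (fun m : 'rV_2 => m 0 ord0) H; rewrite !vec2_0.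
by have := congr1 (fun m : 'rV_2 => m 0 ord_max) H; rewrite !vec2_1.
Qed.

Lemma ta2 (A : tensor3 R 2) (x : 'rV[R[i]]_2) i :
  tensor_apply A x i = 
  (A i ord0 ord0)%:C * x 0 ord0 * x 0 ord0 + (A i ord0 ord_max)%:C * x 0 ord0 * x 0 ord_max
  + (A i ord_max ord0)%:C * x 0 ord_max * x 0 ord0 + (A i ord_max ord_max)%:C * x 0 ord_max * x 0 ord_max.
Proof.
rewrite /tensor_apply !big_ord_recl !big_ord0 !addr0.
have -> : lift ord0 ord0 = ord_max :> 'I_2 by apply/val_inj.
by rewrite addrA.
Qed.

Lemma eqA1 lam (x : 'rV[C]_2) :
  (forall i, tensor_apply (A1 R) x i = lam * x 0 i) <->
  (x 0 ord0 * x 0 ord0 = lam * x 0 ord0 /\ x 0 ord_max * x 0 ord_max = lam * x 0 ord_max).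
Proof.
have E0 : tensor_apply (A1 R) x ord0 = x 0 ord0 * x 0 ord0.
  by rewrite ta2 /A1 /= !rmorph0 !rmorph1; ring.
have E1 : tensor_apply (A1 R) x ord_max = x 0 ord_max * x 0 ord_max.
  by rewrite ta2 /A1 /= !rmorph0 !rmorph1; ring.
split.
  by move=> H; rewrite -E0 -E1; split; apply: H.
by move=> [H0 H1] j; case: (ord2P j) => ->; rewrite ?E0 ?E1.
Qed.

Lemma eqA2 lam (x : 'rV[C]_2) :
  (forall i, tensor_apply (A2 R) x i = lam * x 0 i) <->
  (x 0 ord0 * x 0 ord0 - x 0 ord_max * x 0 ord_max = lam * x 0 ord0 /\
   - (2 * x 0 ord0 * x 0 ord_max) = lam * x 0 ord_max).
Proof.
have E0 : tensor_apply (A2 R) x ord0 = x 0 ord0 * x 0 ord0 - x 0 ord_max * x 0 ord_max.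
  by rewrite ta2 /A2 /= !rmorph0 !rmorphN !rmorph1; ring.
have E1 : tensor_apply (A2 R) x ord_max = - (2 * x 0 ord0 * x 0 ord_max).
  by rewrite ta2 /A2 /= !rmorph0 !rmorphN !rmorph1; ring.
split.
  by move=> H; rewrite -E0 -E1; split; apply: H.
by move=> [H0 H1] j; case: (ord2P j) => ->; rewrite ?E0 ?E1.
Qed.

Lemma classes3 (A : tensor3 R 2) (c : C) (v : 'I_3 -> 'rV[C]_2) :
 c != 0 -> (forall r, eigenpair A c (v r)) -> injective v ->
 (forall lam x, eigenpair A lam x -> lam != 0 /\ exists r, x = (lam / c) *: v r) ->
 num_eigenpair_classes A 3.
Proof.
move=> cn Hv Iv Hc; exists (fun r => (c, v r)); split; first by move=> r; split; [apply: Hv|].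
split.
  move=> r s [t [tn [/= h1 h2]]]; apply: Iv.
  have t1 : t = 1.
    move: h1; rewrite (_ : (3-2)%N = 1%N) // expr1 => h1.
    by apply: (mulIf cn); rewrite mul1r -h1.
  by rewrite h2 t1 scale1r.
move=> lam x H _; have [ln [r ->]] := Hc _ _ H.
exists r; exists (lam / c); split; first by rewrite mulf_neq0 // invr_eq0.
by split => //=; rewrite (_ : (3-2)%N = 1%N) // expr1 divfK.
Qed.

Lemma zero0 (A : tensor3 R 2) :
 (forall lam x, eigenpair A lam x -> lam != 0) -> num_zero_eigenvalues A 0.
Proof.
move=> H; exists (fun _ => (0, 0)); split; first by case.
split; first by case.
by move=> lam x /H/eqP hn hl.
Qed.

Lemma realfact (a b c d : R) :
  a ^+ 3 + c ^+ 3 = 1 -> b ^+ 3 + d ^+ 3 = 0 -> a * b ^+ 2 + c * d ^+ 2 = -1 -> False.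
Proof.
move=> h1 h2 h3.
have : (b + d) * (b ^+ 2 - b * d + d ^+ 2) = 0 by rewrite -h2; ring.
move/eqP; rewrite mulf_eq0 => /orP [/eqP bd | /eqP q].
  have db : d = - b by apply/eqP; rewrite -subr_eq0 opprK addrC bd.
  rewrite db in h3.
  have h4 : b ^+ 2 * (a + c) = -1 by rewrite -h3; ring.
  have ac : a + c < 0.
    case: (ltrP (a + c) 0) => // hp.
    have : 0 <= b ^+ 2 * (a + c) by rewrite mulr_ge0 // sqr_ge0.
    by rewrite h4; lra.
  have h5 : (a + c) * (a ^+ 2 - a * c + c ^+ 2) = 1 by rewrite -h1; ring.
  have q : 0 <= a ^+ 2 - a * c + c ^+ 2.
    have := sqr_ge0 (2 * a - c); have := sqr_ge0 c; nra.
  nra.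
have e1 := sqr_ge0 (2 * b - d); have e2 := sqr_ge0 d.
have d2 : d ^+ 2 = 0 by nra.
have d0 : d = 0 by apply/eqP; rewrite -[d == 0]andTb -(expf_eq0 d 2) d2.
have b2 : b ^+ 2 = 0 by move: q; rewrite d0; nra.
have b0 : b = 0 by apply/eqP; rewrite -[b == 0]andTb -(expf_eq0 b 2) b2.
by move: h3; rewrite b0 d0; lra.
Qed.

Lemma notGL : ~ GL_equiv (A1 R) (A2 R).
Proof.
move=> [P [_ H]].
have h1 := H ord0 ord0 ord0.
have h2 := H ord_max ord_max ord_max.
have h3 := H ord0 ord_max ord_max.
move: h1 h2 h3; rewrite !big_ord_recl !big_ord0 /A1 /A2 /=.
have -> : lift ord0 ord0 = ord_max :> 'I_2 by apply/val_inj.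
move=> h1 h2 h3.
apply: (@realfact (P ord0 ord0) (P ord0 ord_max) (P ord_max ord0) (P ord_max ord_max)).
- by rewrite h1; ring.
- by rewrite h2; ring.
- by rewrite h3; ring.
Qed.
Lemma C2n : (2 : C) != 0. Proof. by rewrite pnatr_eq0. Qed.
Lemma C3n : (3 : C) != 0. Proof. by rewrite pnatr_eq0. Qed.

Lemma sq_cases (y lam : C) : y * y = lam * y -> y = 0 \/ y = lam.
Proof.
move=> h; have : y * (y - lam) = 0 by rewrite mulrBr h mulrC subrr.
move/eqP; rewrite mulf_eq0 => /orP [/eqP -> | ]; first by left.
by rewrite subr_eq0 => /eqP ->; right.
Qed.

Lemma sq0 (y : C) : y * y = 0 -> y = 0.
Proof. by move/eqP; rewrite mulf_eq0 orbb => /eqP. Qed.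

Lemma xnz (x : 'rV[C]_2) : x != 0 -> ~ (x 0 ord0 = 0 /\ x 0 ord_max = 0).
Proof.
move=> xn [a b]; move/eqP: xn; apply; rewrite (vec2E x) a b.
by apply/rowP => j; rewrite !mxE; case: ifP.
Qed.

Lemma vec2_neq0 a b : a != 0 -> vec2 a b != 0.
Proof. by move=> an; apply/eqP => /vec2_eq0 [a0 _]; move/eqP: an. Qed.

Definition v1 (r : 'I_3) : 'rV[C]_2 :=
  if val r == 0%N then vec2 1 0 else if val r == 1%N then vec2 0 1 else vec2 1 1.

Lemma A1classes : num_eigenpair_classes (A1 R) 3.
Proof.
apply: (@classes3 _ 1 v1); first exact: oner_neq0.
- move=> r; case: (ord3P r) => [->|[->|->]]; split; rewrite /v1 /=.
  + by apply: vec2_neq0; exact: oner_neq0.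
  + by apply/eqA1; rewrite vec2_0 vec2_1; split; ring.
  + apply/eqP => /vec2_eq0 [_ h]; move: h; apply/eqP; exact: oner_neq0.
  + by apply/eqA1; rewrite vec2_0 vec2_1; split; ring.
  + by apply: vec2_neq0; exact: oner_neq0.
  + by apply/eqA1; rewrite vec2_0 vec2_1; split; ring.
- move=> r s; case: (ord3P r) => [->|[->|->]]; case: (ord3P s) => [->|[->|->]] //; rewrite /v1 /=;
  move/vec2_inj => [h1 h2]; exfalso; have /eqP n := @oner_neq0 C;
  apply: n; by [rewrite h1|rewrite h2|rewrite -h1|rewrite -h2].
move=> lam x [xn /eqA1 [h0 h1]].
have xz := @xnz x xn.
have ln : lam != 0.
  apply/eqP => l0; apply: xz; rewrite l0 !mul0r in h0 h1.
  by split; apply: sq0.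
split => //; rewrite divr1 (vec2E x) .
case: (sq_cases h0) => e0; case: (sq_cases h1) => e1; rewrite e0 e1.
- by exfalso; apply: xz.
- by exists o1; rewrite /v1 /= vec2Z mulr0 mulr1.
- by exists o0; rewrite /v1 /= vec2Z mulr0 mulr1.
- by exists o2; rewrite /v1 /= vec2Z mulr1.
Qed.
Definition s3 : C := (Num.sqrt (3 : R))%:C.
Lemma s3s : s3 * s3 = 3.
Proof.
rewrite /s3 -rmorphM -expr2 sqr_sqrtr; last by lra.
by rewrite (rmorph_nat (real_complex R) 3).
Qed.

Definition v2 (r : 'I_3) : 'rV[C]_2 :=
  if val r == 0%N then vec2 2 0 else if val r == 1%N then vec2 (-1) s3 else vec2 (-1) (- s3).

Lemma A2classes : num_eigenpair_classes (A2 R) 3.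
Proof.
have n1 : (-1 : C) != 0 by rewrite oppr_eq0 oner_neq0.
apply: (@classes3 _ 2 v2); first exact: C2n.
- move=> r; case: (ord3P r) => [->|[->|->]]; split; rewrite /v2 /=.
  + by apply: vec2_neq0; exact: C2n.
  + by apply/eqA2; rewrite vec2_0 vec2_1; split; ring.
  + by apply: vec2_neq0.
  + by apply/eqA2; rewrite vec2_0 vec2_1 s3s; split; ring.
  + by apply: vec2_neq0.
  + by apply/eqA2; rewrite vec2_0 vec2_1 !mulrNN s3s; split; ring.
- have s0 : s3 != 0 by apply/eqP => h; move: s3s; rewrite h mul0r; apply/eqP; rewrite eq_sym C3n.
  have e3 : (3 : C) = 2 - -1 by ring.
  move=> r s; case: (ord3P r) => [->|[->|->]]; case: (ord3P s) => [->|[->|->]] //; rewrite /v2 /=;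
  move/vec2_inj => [h1 h2]; exfalso.
  + by move/eqP: C3n; apply; rewrite e3 h1 subrr.
  + by move/eqP: C3n; apply; rewrite e3 h1 subrr.
  + by move/eqP: C3n; apply; rewrite e3 -h1 subrr.
  + have : s3 *+ 2 == 0 by rewrite mulr2n {1}h2 addNr.
    by rewrite mulrn_eq0 (negPf s0).
  + by move/eqP: C3n; apply; rewrite e3 -h1 subrr.
  + have : s3 *+ 2 == 0 by rewrite mulr2n -{1}h2 addNr.
    by rewrite mulrn_eq0 (negPf s0).
move=> lam x [xn /eqA2 [h0 h1]].
have xz := @xnz x xn.
set x0 := x 0 ord0 in h0 h1 xz *; set x1 := x 0 ord_max in h0 h1 xz *.
have h1' : x1 * (2 * x0 + lam) = 0.
  rewrite (_ : x1 * (2 * x0 + lam) = 2 * x0 * x1 + lam * x1); last by ring.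
  by rewrite -h1 subrr.
move/eqP: h1'; rewrite mulf_eq0 => /orP [/eqP e1 | /eqP e0].
  rewrite e1 mul0r subr0 in h0.
  case: (sq_cases h0) => e0; first by exfalso; apply: xz.
  have ln : lam != 0 by apply/eqP => l0; apply: xz; rewrite e0 l0.
  split => //; exists o0; rewrite /v2 /= (vec2E x) vec2Z -/x0 -/x1 e0 e1 mulr0.
  by rewrite divfK ?C2n.
have x0e : x0 = - (lam / 2) by apply: (mulIf C2n); rewrite mulNr divfK ?C2n //; rewrite -[lam](subr0) -e0; ring.
have ln : lam != 0.
  apply/eqP => l0; apply: xz; rewrite x0e l0 mul0r oppr0; split => //.
  move: h0; rewrite x0e l0 mul0r oppr0 !mul0r sub0r => /eqP; rewrite oppr_eq0 => /eqP; exact: sq0.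
have q : (x1 - lam / 2 * s3) * (x1 + lam / 2 * s3) = 0.
  have -> : (x1 - lam / 2 * s3) * (x1 + lam / 2 * s3) = x1 * x1 - (lam / 2) * (lam / 2) * (s3 * s3) by ring.
  rewrite s3s (_ : x1 * x1 = x0 * x0 - lam * x0); last by rewrite -h0; ring.
  by rewrite x0e; field.
split => //.
move/eqP: q; rewrite mulf_eq0 => /orP [| ]; rewrite ?subr_eq0 ?addr_eq0 => /eqP e1.
  exists o1; rewrite /v2 /= (vec2E x) vec2Z -/x0 -/x1 e1 x0e.
  by congr vec2; ring.
exists o2; rewrite /v2 /= (vec2E x) vec2Z -/x0 -/x1 e1 x0e.
by congr vec2; ring.
Qed.
Lemma A1zero : num_zero_eigenvalues (A1 R) 0.
Proof.
apply: zero0 => lam x [xn /eqA1 [h0 h1]]; apply/eqP => l0; apply: (@xnz x xn).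
by rewrite l0 !mul0r in h0 h1; split; apply: sq0.
Qed.

Lemma A2zero : num_zero_eigenvalues (A2 R) 0.
Proof.
apply: zero0 => lam x [xn /eqA2 [h0 h1]]; apply/eqP => l0; apply: (@xnz x xn).
rewrite l0 !mul0r in h0 h1.
have x0 : x 0 ord0 = 0.
  move/eqP: h1; rewrite oppr_eq0 !mulf_eq0 => /orP [/orP [] | ].
  - by rewrite pnatr_eq0.
  - by move/eqP.
  - by move/eqP => e; apply: sq0; move: h0; rewrite e mul0r subr0.
by split => //; apply: sq0; move: h0; rewrite x0 mul0r sub0r => /eqP; rewrite oppr_eq0 => /eqP.
Qed.
End S.

Theorem proposition3p2 (R : realType) :
  symmetric3 (A1 R) /\ symmetric3 (A2 R) /\
  ~ GL_equiv (A1 R) (A2 R) /\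
  num_eigenpair_classes (A1 R) 3 /\ num_eigenpair_classes (A2 R) 3 /\
  num_zero_eigenvalues (A1 R) 0 /\ num_zero_eigenvalues (A2 R) 0.
Proof.
split.
  move=> i j k; rewrite /A1.
  by case: i => [[|[|//]] ?]; case: j => [[|[|//]] ?]; case: k => [[|[|//]] ?].
split.
  move=> i j k; rewrite /A2.
  by case: i => [[|[|//]] ?]; case: j => [[|[|//]] ?]; case: k => [[|[|//]] ?].
split; first exact: notGL.
split; first exact: A1classes.
split; first exact: A2classes.
split; first exact: A1zero.
exact: A2zero.
Qed.
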